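(* For every $q\in(0,\frac12)$, \[ \sum_{n=2}^\infty q^{\sigma_\infty(n)}\le\frac{(2-q)q}{1-2q}. \]
   Context: $T$ is the Collatz map $T(n)=\frac{3n+1}2$ ($n$ odd), $T(n)=\frac n2$ ($n$ even); for a positive integer $n$, $\sigma_\infty(n)$ is the least $k\ge0$ with $T^k(n)=1$, and $\sigma_\infty(n)=\infty$ if no such $k$ exists. Convention: $q^\infty=0$ for $0<q<1$. *)

(* Defs.v *)
From mathcomp Require Import all_boot all_order all_algebra.
From mathcomp Require Import all_classical all_reals all_analysis.
Set Implicit Arguments. Unset Strict Implicit. Unset Printing Implicit Defensive.
Import Order.TTheory GRing.Theory Num.Theory.

Definition collatzT (n : nat) : nat :=
  if odd n then (3 * n + 1)./2 else n./2.

(* sigma_inf n = Some k with k the least k such that T^k(n) = 1,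
   or None (standing for infinity) if no such k exists. *)
Definition sigma_inf (n : nat) : option nat :=
  match pselect (exists k, (fun k => iter k collatzT n == 1) k) with
  | left h => Some (ex_minn h)
  | right _ => None
  end.

(* q ^ sigma, with the convention q ^ infinity = 0. *)
Definition qpow_inf {R : realType} (q : R) (s : option nat) : R :=
  match s with
  | Some k => (q ^+ k)%R
  | None => 0%R
  end.

(* Main.v *)
Require Import Defs.
From mathcomp Require Import all_boot all_order all_algebra.
From mathcomp Require Import all_classical all_reals all_analysis.
From mathcomp Require Import zify ring lra.
Import Order.TTheory GRing.Theory Num.Theory.
Local Open Scope ring_scope.

Lemma collatz_even i : collatzT i.*2 = i.
Proof. by rewrite /collatzT ifF ?odd_double // half_double. Qed.

Lemma collatz_odd i : collatzT (i.*2).+1 = (3 * i + 2)%N.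
Proof.
rewrite /collatzT ifT; last by rewrite oddS odd_double.
have -> : (3 * (i.*2).+1 + 1 = (3 * i + 2).*2)%N by rewrite -!mul2n; lia.
by rewrite half_double.
Qed.

Lemma collatz_ge2 n : (3 <= n)%N -> (2 <= collatzT n)%N.
Proof.
have E := odd_double_half n; set i := n./2 in E.
case: (odd n) in E * => /= h; rewrite -E.
  rewrite add1n collatz_odd; lia.
rewrite add0n collatz_even; rewrite -E -mul2n in h; lia.
Qed.

Lemma sigma_step n k : n != 1%N -> sigma_inf n = Some k ->
  exists j, k = j.+1 /\ exists2 j', (j' <= j)%N & sigma_inf (collatzT n) = Some j'.
Proof.
move=> n1; rewrite /sigma_inf; case: pselect => h; last by [].
case=> <-; case: ex_minnP => m Hm Hmin.
case: m Hm Hmin => [|j] Hm Hmin; first by rewrite /= (negbTE n1) in Hm.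
exists j; split => //.
have Hj : iter j collatzT (collatzT n) == 1%N by rewrite -iterSr.
case: pselect => h'; last by exfalso; apply: h'; exists j.
exists (ex_minn h') => //.
by case: ex_minnP => m' _ /(_ _ Hj).
Qed.

Section S.
Variables (R : realType) (q : R).
Hypotheses (q0 : 0 < q) (q1 : q < 1 / 2).

Definition uK (K n : nat) : R :=
  match sigma_inf n with Some k => if (k <= K)%N then q ^+ k else 0 | None => 0 end.
Definition vK K n : R := if (2 <= n)%N then uK K n else 0.

Lemma q2 : 2 * q < 1.
Proof. move: q1; by rewrite ltr_pdivlMr // mulrC. Qed.
Lemma q_le1 : q <= 1. Proof. have := q2; lra. Qed.

Lemma uK_ge0 K n : 0 <= uK K n.
Proof. rewrite /uK; case: sigma_inf => [k|//]; case: ifP => // _; exact/exprn_ge0/ltW. Qed.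
Lemma uK_le1 K n : uK K n <= 1.
Proof. rewrite /uK; case: sigma_inf => [k|//]; case: ifP => // _.
exact/exprn_ile1/q_le1/ltW. Qed.
Lemma vK_ge0 K n : 0 <= vK K n.
Proof. by rewrite /vK; case: ifP => // _; exact: uK_ge0. Qed.

Lemma uK_step K n : n != 1%N -> uK K.+1 n <= q * uK K (collatzT n).
Proof.
move=> n1; have H0 : 0 <= q * uK K (collatzT n) by rewrite mulr_ge0 ?uK_ge0 ?ltW.
rewrite {1}/uK; case E: (sigma_inf n) => [k|] //.
have [j [-> [j' jj E']]] := @sigma_step n k n1 E.
case: ifP => hk //.
rewrite /uK E' ifT; last by lia.
rewrite exprS; apply: ler_wpM2l; first exact: ltW.
exact: (ler_wiXn2l (ltW q0) q_le1 jj).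
Qed.

Lemma sum2 (h : nat -> R) N :
  \sum_(0 <= n < (2 * N)%N) h n = \sum_(0 <= i < N) (h (i.*2) + h (i.*2).+1).
Proof.
elim: N => [|N IH]; first by rewrite !big_geq.
rewrite [in RHS]big_nat_recr //= -IH.
have -> : (2 * N.+1 = (2 * N).+2)%N by lia.
by rewrite !big_nat_recr //= addrA -mul2n.
Qed.

Lemma sum3 (g : nat -> R) N : (forall m, 0 <= g m) ->
  \sum_(0 <= i < N) g (3 * i + 2)%N <= \sum_(0 <= m < (3 * N)%N) g m.
Proof.
move=> g0; elim: N => [|N IH]; first by rewrite !big_geq.
rewrite big_nat_recr //= mulnS.
have -> : (3 + 3 * N = (3 * N).+3)%N by lia.
rewrite !big_nat_recr //= -!addrA lerD // -[_ (3 * N + 2)%N]add0r.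
have -> : (3 * N + 2 = (3 * N).+2)%N by lia.
by rewrite addrA lerD // addr_ge0.
Qed.

Lemma sum_widen (h : nat -> R) N M : (N <= M)%N -> (forall m, 0 <= h m) ->
  \sum_(0 <= n < N) h n <= \sum_(0 <= n < M) h n.
Proof.
move=> NM h0; rewrite (@big_cat_nat _ _ _ N 0 M _ _ (leq0n N) NM) /= lerDl.
by apply: sumr_ge0 => i _.
Qed.

Lemma sum_ind2 N : \sum_(0 <= n < N) ((n == 2%N)%:R : R) <= 1.
Proof.
elim: N => [|N IH]; first by rewrite big_geq.
rewrite big_nat_recr //=; case: (eqVneq N 2) => [->|hN]; last by rewrite addr0.
rewrite !big_nat_recr //= big_geq //; by rewrite !add0r.
Qed.

Definition bnd : R := q / (1 - 2 * q).
Lemma bnd_ge0 : 0 <= bnd.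
Proof. rewrite /bnd divr_ge0 ?ltW //; have := q2; lra. Qed.
Lemma bnd_eq : q * (1 + 2 * bnd) = bnd.
Proof. rewrite /bnd; have := q2 => h; field; lra. Qed.

Definition hh K n : R := if (3 <= n)%N then vK K (collatzT n) else 0.
Lemma hh_ge0 K n : 0 <= hh K n.
Proof. by rewrite /hh; case: ifP => // _; exact: vK_ge0. Qed.

Lemma vK0 n : vK 0 n = 0.
Proof.
rewrite /vK /uK; case: ifP => // n2; case E: sigma_inf => [k|] //.
have n1 : n != 1%N by apply/eqP => h; rewrite h in n2.
by have [j [-> _]] := @sigma_step n k n1 E.
Qed.

Lemma vK_pt K n : vK K.+1 n <= q * ((n == 2%N)%:R + hh K n).
Proof.
have H0 : 0 <= q * ((n == 2%N)%:R + hh K n).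
  by rewrite mulr_ge0 ?addr_ge0 ?ler0n ?hh_ge0 ?ltW.
rewrite /vK; case: ifP => // n2.
case: (eqVneq n 2) => [->|n2'].
  rewrite /hh /= addr0 mulr1; apply: le_trans (@uK_step K 2 isT) _.
  by rewrite -[leRHS]mulr1; apply: ler_wpM2l; [exact: ltW | exact: uK_le1].
have n3 : (3 <= n)%N by move: n2 n2'; lia.
rewrite add0r /hh n3 /vK collatz_ge2 //; apply: uK_step; by move: n3; lia.
Qed.

Lemma main_bound K N : \sum_(0 <= n < N) vK K n <= bnd.
Proof.
elim: K N => [|K IH] N.
  by rewrite big1 ?bnd_ge0 // => i _; rewrite vK0.
apply: le_trans (_ : \sum_(0 <= n < N) q * ((n == 2%N)%:R + hh K n) <= _).
  by apply: ler_sum => i _; apply: vK_pt.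
rewrite -mulr_sumr -bnd_eq; apply: ler_wpM2l; first exact: ltW.
rewrite big_split /=; apply: lerD; first exact: sum_ind2.
have NN : (N <= 2 * N)%N by lia.
apply: le_trans (@sum_widen (hh K) N (2 * N)%N NN (hh_ge0 K)) _.
rewrite sum2 big_split /= mulr2n mulrDl mul1r; apply: lerD.
  apply: le_trans (IH N); apply: ler_sum => i _.
  by rewrite /hh collatz_even; case: ifP => // _; exact: vK_ge0.
apply: le_trans (IH (3 * N)%N); apply: le_trans (@sum3 (vK K) N (@vK_ge0 K)).
apply: ler_sum => i _.
by rewrite /hh collatz_odd; case: ifP => // _; exact: vK_ge0.
Qed.
End S.

Lemma partial (R : realType) (q : R) (q0 : 0 < q) (q1 : q < 1 / 2) N :
  \sum_(2 <= n < N) qpow_inf q (sigma_inf n) <= bnd R q.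
Proof.
set K := \max_(i < N) odflt 0%N (sigma_inf i).
apply: le_trans (@main_bound R q q0 q1 K N).
case: (ltnP N 2) => hN.
  rewrite big_geq; last by lia.
  by apply: sumr_ge0 => i _; exact: (@vK_ge0 R q q0).
rewrite (@big_cat_nat _ _ _ 2 0 N _ _ (leq0n 2) hN) /= -[X in X <= _]add0r.
apply: lerD; first by apply: sumr_ge0 => i _; exact: (@vK_ge0 R q q0).
rewrite big_nat_cond [X in _ <= X]big_nat_cond; apply: ler_sum => i /andP[/andP[i2 iN] _].
rewrite /vK i2 /uK; case E: (sigma_inf i) => [k|] //=.
rewrite ifT //.
have := @leq_bigmax _ (fun j : 'I_N => odflt 0%N (sigma_inf j)) (Ordinal iN).
by rewrite /= E.
Qed.

Theorem mainTheorem13 (R : realType) (q : R) :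
  0 < q -> q < 1 / 2 ->
  (\sum_(2 <= n <oo) (qpow_inf q (sigma_inf n))%:E
     <= ((2 - q) * q / (1 - 2 * q))%:E)%E.
Proof.
move=> q0 q1.
have qq := @q2 R q q1.
apply: lime_le.
  apply: is_cvg_nneseries => n _ _; rewrite lee_fin.
  by case: sigma_inf => [k|] //=; rewrite exprn_ge0 // ltW.
apply: nearW => N; rewrite sumEFin lee_fin.
apply: le_trans (@partial R q q0 q1 N) _.
rewrite /bnd; apply: ler_wpM2r; first by rewrite invr_ge0; lra.
nra.
Qed.
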